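(* Let $\mathbb{F}$ be a field of characteristic $2$ with at least $4$ elements, let $k\geq 1$ be an integer, and let $B\in M_{4k+2}(\mathbb{F})$ be a non-derogative matrix with characteristic polynomial $p_B(x)=x^{4k+2}+w_{4k+1}x^{4k+1}+w_{4k}x^{4k}+\dots+w_0$. Let $a\in\mathbb{F}$ with $a\neq 0,1$. (a) If $\operatorname{Trace}(B)=c\neq 0$, then there exist $N,D\in M_{4k+2}(\mathbb{F})$ with $B=N+D$, $N^2=0$, and $D$ diagonalizable with every eigenvalue in $\{0,\ c,\ ca,\ c(a+1)\}$. (b) If $\operatorname{Trace}(B)=0$ and $b\in\mathbb{F}$ satisfies $b^2=w_{4k}+a^2+a+1$ (such $b$ always exists when $\mathbb{F}$ is finite), then there exist $N,D\in M_{4k+2}(\mathbb{F})$ with $B=N+D$, $N^2=0$, and $D$ diagonalizable with every eigenvalue in $\{b,\ b+1,\ b+a,\ b+a+1\}$.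
   Context: A square matrix is non-derogative if its minimal polynomial equals its characteristic polynomial. A matrix $D\in M_n(\mathbb{F})$ is diagonalizable if there exists an invertible $U\in M_n(\mathbb{F})$ such that $U^{-1}DU$ is diagonal. *)

(* Defs.v *)
From HB Require Import structures.
From mathcomp Require Import all_boot all_order all_algebra.
Set Implicit Arguments. Unset Strict Implicit. Unset Printing Implicit Defensive.
Import GRing.Theory.
Local Open Scope ring_scope.

Definition non_derogative (F : fieldType) (n : nat) (A : 'M[F]_n.+1) : Prop :=
  mxminpoly A = char_poly A.

Definition diagonalizable_mx (F : fieldType) (n : nat) (D : 'M[F]_n) : Prop :=
  exists U : 'M[F]_n, U \in unitmx /\ is_diag_mx (invmx U *m D *m U).

(* Main.v *)
Require Import Defs.
From HB Require Import structures.
From mathcomp Require Import all_boot all_order all_algebra.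
From Stdlib Require Import Classical.
From mathcomp Require Import zify ring.
Set Implicit Arguments. Unset Strict Implicit. Unset Printing Implicit Defensive.
Import GRing.Theory.
Local Open Scope ring_scope.

Section Cyclic.
Variables (F : fieldType) (n' : nat) (B : 'M[F]_n'.+1).
Local Notation hB := (horner_mx B).

Lemma mu_nz : mxminpoly B != 0.
Proof. by rewrite -size_poly_eq0 size_mxminpoly. Qed.

Lemma hmulA (v : 'rV[F]_n'.+1) p q : v *m hB (p * q) = (v *m hB p) *m hB q.
Proof. by rewrite rmorphM /= mulmxA. Qed.

Lemma hmulC (v : 'rV[F]_n'.+1) p q : v *m hB (p * q) = (v *m hB q) *m hB p.
Proof. by rewrite mulrC hmulA. Qed.

Lemma bez_zero (v : 'rV[F]_n'.+1) f g : coprimep f g ->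
  v *m hB f = 0 -> v *m hB g = 0 -> v = 0.
Proof.
move=> /Bezout_eq1_coprimepP [[u1 u2] /= e] vf vg.
have -> : v = v *m hB (u1 * f + u2 * g) by rewrite e rmorph1 mulmx1.
by rewrite rmorphD mulmxDr !hmulC vf vg !mul0mx addr0.
Qed.

Lemma nz_rowmx r s (A : 'M[F]_(r, s)) : A != 0 -> exists x : 'rV_r, x *m A != 0.
Proof.
case/matrix0Pn => i [j nz]; exists (delta_mx 0 i).
apply/matrix0Pn; exists 0, j; by rewrite -rowE mxE.
Qed.

Lemma irr_factor (p : {poly F}) : (1 < size p)%N ->
  exists2 q, irreducible_poly q & q %| p.
Proof.
elim: {p}(size p) {-2}p (leqnn (size p)) => [|N IH] p.
  by rewrite leqn0 => /eqP ->.
move=> sp s1p.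
have [irr|nirr] := classic (irreducible_poly p); first by exists p.
have p0 : p != 0 by rewrite -size_poly_gt0 (ltn_trans _ s1p).
have [q [sq qp nqp]] : exists q : {poly F}, [/\ size q != 1%N, q %| p & ~~ (q %= p)].
  apply: NNPP => H; apply: nirr; split => // q sq qp.
  by apply: NNPP => nq; apply: H; exists q; split => //; apply/negP.
have q0 : q != 0 by apply: contraNneq p0 => q0; move: qp; rewrite q0 dvd0p.
have sqp : (size q < size p)%N.
  by rewrite ltn_neqAle dvdp_leq // andbT dvdp_size_eqp.
have s1q : (1 < size q)%N.
  by rewrite ltn_neqAle eq_sym sq /= size_poly_gt0.
have [r ir rq] := IH q (leq_trans sqp sp) s1q.
by exists r => //; apply: dvdp_trans rq qp.
Qed.

Lemma exact_ann (h : {poly F}) : h %| mxminpoly B ->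
  exists v : 'rV_n'.+1, v *m hB h = 0 /\ forall g, v *m hB g = 0 -> h %| g.
Proof.
elim: {h}(size h) {-2}h (leqnn (size h)) => [|N IH] h.
  rewrite leqn0 size_poly_eq0 => /eqP ->; rewrite dvd0p => /eqP mu0.
  by have := mu_nz; rewrite mu0 eqxx.
move=> sh hmu.
have h0 : h != 0.
  by apply: contraNneq mu_nz => h0; move: hmu; rewrite h0 dvd0p.
have [sh1|sh1] := leqP (size h) 1.
  exists 0; split; first by rewrite mul0mx.
  move=> g _; apply: dvdp_trans (dvd1p g).
  by rewrite dvdp1 eqn_leq sh1 size_poly_gt0.
have [pi ipi pih] := irr_factor sh1.
have spi : (1 < size pi)%N by case: ipi.
have pi0 : pi != 0 by apply: irredp_neq0.
pose P e := pi ^+ e %| h.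
have exP : exists e, P e by exists 1%N; rewrite /P expr1.
have ubP : forall e, P e -> (e <= size h)%N.
  move=> e Pe; have := dvdp_leq h0 Pe => le.
  apply: (leq_trans _ le); apply: (leq_trans _ (leq_pred _)).
  rewrite size_exp -{1}[e]mul1n leq_mul2r -ltnS prednK ?spi ?orbT //.
  by rewrite (ltn_trans _ spi).
case: (ex_maxnP exP ubP) => e Pe emax.
have e0 : (0 < e)%N by apply: emax; rewrite /P expr1.
set r := h %/ pi ^+ e.
have hr : h = r * pi ^+ e by rewrite divpK.
have npir : ~~ (pi %| r).
  apply/negP => pir; suff : (e.+1 <= e)%N by rewrite ltnn.
  by apply: emax; rewrite /P hr exprSr [r * _]mulrC dvdp_mul.
have cpr : coprimep (pi ^+ e) r.
  by apply: coprimep_expl; rewrite irreducible_poly_coprime.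
have r0 : r != 0 by apply: contraNneq h0 => r0; rewrite hr r0 mul0r.
have spe : (1 < size (pi ^+ e))%N.
  apply: (leq_trans spi); apply: dvdp_leq; first by rewrite expf_neq0.
  by clear -e0; case: e e0 => // e _; rewrite exprSr dvdp_mull.
have sr : (size r <= N)%N.
  rewrite -ltnS (leq_trans _ sh) // hr size_mul ?expf_neq0 //.
  by move: spe; set s := size (pi ^+ e); case: s => [|[|s]] // _; rewrite !addnS /= ltnS leq_addr.
have rmu : r %| mxminpoly B by apply: dvdp_trans hmu; rewrite hr dvdp_mulIl.
have [vr [vrr vrex]] := IH r sr rmu.
set q := mxminpoly B %/ pi ^+ e.
have muq : mxminpoly B = q * pi ^+ e.
  by rewrite divpK // (dvdp_trans Pe hmu).
have [e' ee] : exists e', e = e'.+1 by case: e e0 {Pe emax hr npir cpr spe muq r r0 vr vrr vrex rmu sr q} => // e' _; exists e'.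
subst e.
have q0 : q != 0.
  by apply: contraNneq mu_nz => q0; rewrite muq q0 mul0r.
set w := q * pi ^+ e'.
have hw : hB w != 0.
  apply/negP => /eqP /mxminpoly_min; rewrite muq exprSr mulrA /w.
  rewrite -[X in _ %| X]mulr1 dvdp_mul2l ?mulf_neq0 ?expf_neq0 //.
  by rewrite dvdp1 => /eqP s1; rewrite s1 in spi.
have [x xw] := nz_rowmx hw.
pose vp := x *m hB q.
have vpe : vp *m hB (pi ^+ e'.+1) = 0 by rewrite -hmulA -muq mx_root_minpoly mulmx0.
have vpex : forall g, vp *m hB g = 0 -> pi ^+ e'.+1 %| g.
  move=> g vg; suff : forall j, (j <= e'.+1)%N -> pi ^+ j %| g by apply.
  elim=> [|j IHj] hj; first by rewrite expr0 dvd1p.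
  have := IHj (ltnW hj) => pjg.
  set g' := g %/ pi ^+ j; have gg : g = g' * pi ^+ j by rewrite divpK.
  have pig' : pi %| g'.
    apply/negPn/negP => npg.
    have cp : coprimep (pi ^+ (e'.+1 - j)) g'.
      by apply: coprimep_expl; rewrite irreducible_poly_coprime.
    pose y := x *m hB (q * pi ^+ j).
    have y0 : y = 0.
      apply: (bez_zero cp).
        by rewrite /y -hmulA -mulrA -exprD subnKC ?(ltnW hj) // -muq mx_root_minpoly mulmx0.
      by rewrite /y -hmulA -mulrA [pi ^+ j * _]mulrC -gg hmulA.
    move/negP: xw; apply; apply/eqP.
    have -> : w = q * pi ^+ j * pi ^+ (e' - j).
      by rewrite /w -mulrA -exprD subnKC.
    by rewrite hmulA -/y y0 mul0mx.
  by rewrite gg exprS dvdp_mul.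
exists (vp + vr); split.
  rewrite mulmxDl hr hmulC vpe mul0mx hmulA vrr mul0mx addr0 //.
move=> g; rewrite mulmxDl => zg.
have vrg : forall t, vr *m hB (t * r) = 0 by move=> t; rewrite hmulC vrr mul0mx.
have vpg : forall t, vp *m hB (t * pi ^+ e'.+1) = 0 by move=> t; rewrite hmulC vpe mul0mx.
have h1 : vp *m hB (g * r) = 0.
  by have := congr1 (mulmx^~ (hB r)) zg; rewrite /= mulmxDl mul0mx -(hmulA vp) -(hmulA vr) vrg addr0.
have h2 : vr *m hB (g * pi ^+ e'.+1) = 0.
  by have := congr1 (mulmx^~ (hB (pi ^+ e'.+1))) zg; rewrite /= mulmxDl mul0mx -(hmulA vp) -(hmulA vr) vpg add0r.
have := vpex _ h1; rewrite (Gauss_dvdpl _ cpr) => p1.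
have cpr' : coprimep r (pi ^+ e'.+1) by rewrite coprimep_sym.
have := vrex _ h2; rewrite (Gauss_dvdpl _ cpr') => p2.
by rewrite hr mulrC Gauss_dvdp // p1 p2.
Qed.

Lemma exact_indep (v : 'rV[F]_n'.+1)
  (hv : forall g, v *m hB g = 0 -> mxminpoly B %| g)
  (hmu : size (mxminpoly B) = n'.+2) :
  forall g : {poly F}, (size g <= n'.+1)%N -> v *m hB g = 0 -> g = 0.
Proof.
move=> g sg /hv mg; apply/eqP; apply: contraTT mg => nz; apply/negP => /(dvdp_leq nz).
by rewrite hmu; apply/negP; rewrite -ltnNge ltnS.
Qed.

Lemma full_span (v : 'rV[F]_n'.+1)
  (hv : forall g : {poly F}, (size g <= n'.+1)%N -> v *m hB g = 0 -> g = 0) r (S : 'M[F]_(r, n'.+1))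
  (pd : nat -> {poly F}) :
  (forall d, (d < n'.+1)%N -> size (pd d) = d.+1 /\ (v *m hB (pd d) <= S)%MS) ->
  row_full S.
Proof.
move=> hpd.
have step1 : forall s (g : {poly F}), (size g <= s)%N -> (s <= n'.+1)%N -> (v *m hB g <= S)%MS.
  elim => [|s IH] g sg sn.
    move: sg; rewrite leqn0 size_poly_eq0 => /eqP ->.
    by rewrite rmorph0 mulmx0 sub0mx.
  have [sgs|] := leqP (size g) s; first by apply: IH => //; apply: ltnW.
  move=> sgs; have eg : size g = s.+1 by apply/eqP; rewrite eqn_leq sg sgs.
  have [ps Ps] := hpd s sn.
  have p0 : lead_coef (pd s) != 0 by rewrite lead_coef_eq0 -size_poly_eq0 ps.
  pose c := lead_coef g / lead_coef (pd s).
  have -> : g = (g - c *: pd s) + c *: pd s by rewrite subrK.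
  rewrite rmorphD mulmxDr addmx_sub //; last first.
    by rewrite -mul_polyC rmorphM /= horner_mx_C -mulmxE mul_scalar_mx -scalemxAr scalemx_sub.
  apply: IH; last by apply: ltnW.
  apply/leq_sizeP => j sj; rewrite coefB coefZ.
  move: sj; rewrite leq_eqVlt => /orP [/eqP <-|sj].
    have lg : lead_coef g = g`_s by rewrite /lead_coef eg.
    have lp : lead_coef (pd s) = (pd s)`_s by rewrite /lead_coef ps.
    by rewrite -lg -lp /c divfK // subrr.
  by rewrite !nth_default ?mulr0 ?subrr // ?ps ?eg.
pose K := \matrix_(i < n'.+1) (v *m hB ('X ^+ i)).
have KS : (K <= S)%MS.
  apply/row_subP => i; rewrite rowK; apply: (step1 n'.+1) => //.
  by rewrite size_polyXn.
have Kfree : row_free K.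
  apply: inj_row_free => u uK.
  have e : u *m K = v *m hB (rVpoly u).
    rewrite mulmx_sum_row /rVpoly poly_def rmorph_sum mulmx_sumr /=.
    apply: eq_bigr => i _; rewrite rowK -mul_polyC rmorphM /= horner_mx_C.
    by rewrite -mulmxE mul_scalar_mx -scalemxAr valK.
  have : v *m hB (rVpoly u) = 0 by rewrite -e.
  move/(hv (rVpoly u) (size_poly _ _)) => ru0.
  by rewrite -[u]rVpolyK ru0 linear0.
rewrite /row_full eqn_leq rank_leq_col /=.
by rewrite -{1}(eqP Kfree) mxrankS.
Qed.
End Cyclic.

Section Block.
Variable F : fieldType.

Lemma comm_step s (Z K : 'M[F]_s) (x : F) : Z *m Z = Z *m K -> Z *m K = K *m Z ->
  Z *m (Z - x%:M) = (K - x%:M) *m Z.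
Proof.
move=> zz zk; rewrite mulmxBr mulmxBl zz zk mul_mx_scalar mul_scalar_mx //.
Qed.

Lemma block_decomp n m (B : 'M[F]_n) (P : 'M[F]_(m + m, n)) (Q : 'M[F]_(n, m + m))
  (G H : 'M[F]_m) (x1 x2 x3 : F) :
  Q *m P = 1%:M -> P *m Q = 1%:M -> P *m B = block_mx 0 1%:M G H *m P ->
  (H - x1%:M) *m ((H - x2%:M) *m (H - x3%:M)) = 0 ->
  exists N D : 'M[F]_n, [/\ B = N + D, N *m N = 0 &
    D *m (D - x1%:M) *m (D - x2%:M) *m (D - x3%:M) = 0].
Proof.
move=> QP PQ PB HE.
pose M' := block_mx 0 1%:M 0 H : 'M[F]_(m + m).
pose X := block_mx 0 0 G 0 : 'M[F]_(m + m).
pose K := block_mx H 0 0 H : 'M[F]_(m + m).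
have conjM : forall A1 A2 : 'M[F]_(m + m), (Q *m A1 *m P) *m (Q *m A2 *m P) = Q *m (A1 *m A2) *m P.
  by move=> A1 A2; rewrite !mulmxA -[Q *m A1 *m P *m Q]mulmxA PQ mulmx1.
have conjS : forall (A : 'M[F]_(m + m)) (x : F), Q *m A *m P - x%:M = Q *m (A - x%:M) *m P.
  move=> A x; rewrite mulmxBr mulmxBl; congr (_ - _).
  by rewrite mul_mx_scalar -scalemxAl QP scalemx1.
exists (Q *m X *m P), (Q *m M' *m P); split.
- rewrite -mulmxDl -mulmxDr /X /M' add_block_mx !addr0 !add0r.
  by rewrite -mulmxA -PB mulmxA QP mul1mx.
- by rewrite conjM /X mulmx_block !mulmx0 !mul0mx !addr0 block_mx0 mulmx0 mul0mx.
have ZZ : M' *m M' = M' *m K.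
  by rewrite /M' /K !mulmx_block ?mulmx0 ?mul0mx ?mulmx1 ?mul1mx ?addr0 ?add0r.
have ZK : M' *m K = K *m M'.
  by rewrite /M' /K !mulmx_block ?mulmx0 ?mul0mx ?mulmx1 ?mul1mx ?addr0 ?add0r.
have KE : (K - x1%:M) *m (K - x2%:M) *m (K - x3%:M) = 0.
  rewrite /K (scalar_mx_block m m x1) (scalar_mx_block m m x2) (scalar_mx_block m m x3).
  rewrite !opp_block_mx !add_block_mx !oppr0 !addr0 !mulmx_block.
  rewrite !mulmx0 !mul0mx !addr0 !add0r -!mulmxA HE.
  by rewrite !mul0mx block_mx0.
rewrite (conjS M' x1) (conjS M' x2) (conjS M' x3) !conjM.
have -> : M' *m (M' - x1%:M) *m (M' - x2%:M) *m (M' - x3%:M) = 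
    (K - x1%:M) *m (K - x2%:M) *m (K - x3%:M) *m M'.
  rewrite (comm_step x1 ZZ ZK) -[(K - x1%:M) *m M' *m _]mulmxA (comm_step x2 ZZ ZK).
  rewrite mulmxA -[_ *m M' *m (M' - x3%:M)]mulmxA (comm_step x3 ZZ ZK).
  by rewrite !mulmxA.
by rewrite KE mul0mx mulmx0 mul0mx.
Qed.

Lemma Hcubic l (H : 'M[F]_(l.+1)) (lam : 'I_(l.+1) -> F) (al be : F) :
  (forall i j, i != ord_max -> H i j = if i == j then lam i else 0) ->
  (forall i, i != ord_max -> (lam i - al) * (lam i - be) = 0) ->
  (H - (H ord_max ord_max)%:M) *m ((H - al%:M) *m (H - be%:M)) = 0.
Proof.
move=> Hd Hl.
have E0 : forall k j, k != ord_max -> ((H - al%:M) *m (H - be%:M)) k j = 0.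
  move=> k j kmax; rewrite mxE (bigD1 k) //= big1 ?addr0; last first.
    by move=> p pk; rewrite !mxE Hd // eq_sym (negPf pk) mulr0n subr0 mul0r.
  rewrite !mxE !Hd // eqxx mulr1n.
  have [kj|_] := eqVneq k j; first by rewrite /= mulr1n Hl.
  by rewrite mulr0n subr0 mulr0.
apply/matrixP => i j; rewrite !mxE (bigD1 ord_max) //= big1 ?addr0; last first.
  by move=> k kmax; rewrite E0 ?mulr0.
rewrite !mxE.
case: (eqVneq i ord_max) => [->|imax]; first by rewrite mulr1n subrr mul0r.
by rewrite (Hd i ord_max imax) (negPf imax) mulr0n subrr mul0r.
Qed.
End Block.

Section Construct.
Variables (F : fieldType) (l : nat) (t d : F).

Definition yp : {poly F} := 'X * ('X + t%:P).
Definition yq : {poly F} := 'X * ('X + (t + d)%:P).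
Definition phi (j : 'I_l.+2) : {poly F} :=
  if j == ord_max then yp ^+ l * yq else yp ^+ j.
Definition ttc (i : 'I_l.+2) : F := if (i : nat) == l then t + d else t.

Lemma size_XX (c : F) : size ('X * ('X + c%:P) : {poly F}) = 3%N.
Proof. by rewrite size_mul ?polyX_eq0 -?size_poly_eq0 ?size_XaddC ?size_polyX. Qed.

Lemma yp_neq0 : yp != 0.
Proof. by rewrite -size_poly_eq0 size_XX. Qed.

Lemma size_yp_exp j : size (yp ^+ j) = (2 * j).+1.
Proof.
have := size_exp yp j; rewrite size_XX /= => e.
by rewrite -e prednK // size_poly_gt0 expf_neq0 // yp_neq0.
Qed.

Lemma size_phi j : size (phi j) = (2 * j).+1.
Proof.
rewrite /phi; case: eqP => [->|_]; last exact: size_yp_exp.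
rewrite size_mul ?expf_neq0 ?yp_neq0 -?size_poly_eq0 ?size_XX // size_yp_exp /=.
lia.
Qed.

Lemma phi_rel (i : 'I_l.+2) : i != ord_max ->
  phi i * 'X * 'X = phi (inord i.+1) - ttc i *: (phi i * 'X).
Proof.
move=> imax.
have il : (i <= l)%N by move: imax (ltn_ord i); rewrite -val_eqE /=; lia.
rewrite /phi /ttc (negPf imax) -mul_polyC.
have [il'|nil] := eqVneq (i : nat) l.
  have -> : (inord i.+1 : 'I_l.+2) == ord_max = true.
    by apply/eqP/val_inj => /=; rewrite inordK; lia.
  rewrite il' /yq /yp; ring.
have -> : (inord i.+1 : 'I_l.+2) == ord_max = false.
  by apply/negP => /eqP /(congr1 val) /=; rewrite inordK; lia.
rewrite inordK; last by lia.
rewrite exprSr /yp; ring.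
Qed.


Lemma hZ n' (B : 'M[F]_n'.+1) (c : F) p : horner_mx B (c *: p) = c *: horner_mx B p.
Proof. by rewrite -mul_polyC rmorphM /= horner_mx_C -mulmxE mul_scalar_mx. Qed.

Lemma construct n' (hn : (l.+2 + l.+2)%N = n'.+1) (B : 'M[F]_n'.+1) (v : 'rV[F]_n'.+1)
  (hv : forall g : {poly F}, (size g <= n'.+1)%N -> v *m horner_mx B g = 0 -> g = 0) :
  exists (P : 'M[F]_(l.+2 + l.+2, n'.+1)) (Q : 'M[F]_(n'.+1, l.+2 + l.+2))
         (G H : 'M[F]_l.+2),
   [/\ Q *m P = 1%:M, P *m Q = 1%:M, P *m B = block_mx 0 1%:M G H *m P,
       (forall i j, i != ord_max -> H i j = if i == j then - ttc i else 0) &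
       \tr B = \tr H].
Proof.
pose U := \matrix_(j < l.+2) (v *m horner_mx B (phi j)).
pose P := col_mx U (U *m B).
have rowU j : row j U = v *m horner_mx B (phi j) by rewrite rowK.
have rowUB j : row j (U *m B) = v *m horner_mx B (phi j * 'X).
  by rewrite row_mul rowU rmorphM /= horner_mx_X -mulmxE mulmxA.
have Pfull : row_full P.
  apply: (full_span hv (pd := fun d => phi (inord d./2) * 'X^(odd d))) => dd ddn.
  have hh : (dd./2 < l.+2)%N.
    have := odd_double_half dd; rewrite -mul2n; move: ddn; rewrite -hn; lia.
  split.
    rewrite size_mul ?size_polyXn ?size_phi ?inordK //; last first.
      by rewrite -size_poly_eq0 size_polyXn.
      by rewrite -size_poly_eq0 size_phi.
    have := odd_double_half dd; rewrite -mul2n; lia.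
  case: (odd dd).
    by rewrite expr1 -rowUB -(rowKd (inord dd./2) U (U *m B)) row_sub.
  by rewrite expr0 mulr1 -rowU -(rowKu (inord dd./2) U (U *m B)) row_sub.
pose Q := pinvmx P.
have QP : Q *m P = 1%:M.
  by have := mulmxKpV (_ : (1%:M <= P)%MS); rewrite mul1mx; apply; rewrite sub1mx.
have Pfree : row_free P by rewrite /row_free (eqP Pfull) hn.
have PQ : P *m Q = 1%:M.
  by apply: (row_free_inj Pfree); rewrite mul1mx -mulmxA QP mulmx1.
pose R := U *m B *m B *m Q.
have PB : P *m B = block_mx 0 1%:M (lsubmx R) (rsubmx R) *m P.
  rewrite mul_col_mx mul_block_col !mul0mx mul1mx add0r.
  by rewrite -mul_row_col hsubmxK /R -[_ *m Q *m P]mulmxA QP mulmx1.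
exists P, Q, (lsubmx R), (rsubmx R); split => //.
- move=> i j imax.
  pose e : 'rV[F]_(l.+2 + l.+2) :=
    delta_mx 0 (lshift _ (inord i.+1)) - ttc i *: delta_mx 0 (rshift _ i).
  have eP : e *m P = row i (U *m B *m B).
    rewrite mulmxBl -scalemxAl -!rowE rowKu rowKd rowU rowUB.
    rewrite row_mul rowUB -mulmxA -[B in _ *m (_ *m B)](horner_mx_X B) mulmxE -rmorphM.
    by rewrite phi_rel // rmorphB /= mulmxBr hZ scalemxAr.
  have rR : row i R = e by rewrite /R row_mul -eP -mulmxA PQ mulmx1.
  have -> : rsubmx R i j = row i R 0 (rshift _ j) by rewrite !mxE.
  rewrite rR.
  rewrite !mxE eq_rlshift eqxx /= (inj_eq (@rshift_inj _ _)) eq_sym.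
  by case: (i == j); rewrite ?mulr1 ?mulr0 ?sub0r ?subr0 ?oppr0.
have -> : B = Q *m (block_mx 0 1%:M (lsubmx R) (rsubmx R) *m P).
  by rewrite -PB mulmxA QP mul1mx.
by rewrite mxtrace_mulC -mulmxA PQ mulmx1 mxtrace_block mxtrace0 add0r.
Qed.
End Construct.

Section Core.
Variable F : fieldType.

Lemma hshift n' (B : 'M[F]_n'.+1) (b : F) (g : {poly F}) :
  horner_mx (B - b%:M) g = horner_mx B (g \Po ('X - b%:P)).
Proof.
elim/poly_ind: g => [|p c IH]; first by rewrite comp_poly0 !rmorph0.
rewrite comp_polyD comp_polyM comp_polyX comp_polyC !rmorphD !rmorphM /= IH.
by rewrite !horner_mx_C horner_mx_X rmorphB /= horner_mx_X horner_mx_C.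
Qed.

Lemma core (l n' : nat) (hn : (l.+2 + l.+2)%N = n'.+1) (B : 'M[F]_n'.+1)
  (hB : size (mxminpoly B) = n'.+2) (b t d x1 x2 x3 : F) :
  (forall i : 'I_l.+2, i != ord_max -> (- ttc t d i - x2) * (- ttc t d i - x3) = 0) ->
  \tr (B - b%:M) = \sum_(i < l.+1) (- ttc t d (widen_ord (leqnSn _) i)) + x1 ->
  exists N D : 'M[F]_n'.+1, [/\ B = N + D, N *m N = 0 &
    (D - b%:M) *m (D - (b + x1)%:M) *m (D - (b + x2)%:M) *m (D - (b + x3)%:M) = 0].
Proof.
move=> hl htr.
have [v [_ vex]] := exact_ann (dvdpp (mxminpoly B)).
have hv := exact_indep vex hB.
have hv' : forall g : {poly F}, (size g <= n'.+1)%N ->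
    v *m horner_mx (B - b%:M) g = 0 -> g = 0.
  move=> g sg; rewrite hshift => /hv.
  rewrite size_comp_poly2 ?size_XsubC // => /(_ sg) /eqP.
  rewrite -size_poly_eq0 size_comp_poly2 ?size_XsubC // size_poly_eq0.
  by move/eqP.
have [P [Q [G [H [QP PQ PB Hd trH]]]]] := construct t d hn hv'.
have Hmax : H ord_max ord_max = x1.
  apply: (@addrI _ (\sum_(i < l.+1) (- ttc t d (widen_ord (leqnSn _) i)))).
  rewrite -htr trH /mxtrace [in RHS]big_ord_recr /=; congr (_ + _).
  apply: eq_bigr => i _; rewrite Hd ?eqxx //.
  by rewrite -val_eqE /= neq_ltn ltn_ord.
have HE := Hcubic Hd hl; rewrite Hmax in HE.
have [N [D' [BND NN DE]]] := block_decomp QP PQ PB HE.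
exists N, (D' + b%:M); split.
- by rewrite addrA -BND subrK.
- by [].
have sh : forall x, D' + b%:M - (b + x)%:M = D' - x%:M.
  by move=> x; rewrite raddfD /= opprD addrA addrK.
by rewrite !sh addrK.
Qed.
End Core.

Section Final.
Variable F : fieldType.

Lemma finish n' (D : 'M[F]_n'.+1) (rs : seq F) : uniq rs ->
  horner_mx D (\prod_(x <- rs) ('X - x%:P)) = 0 ->
  diagonalizable_mx D /\ (forall x, eigenvalue D x -> x \in rs).
Proof.
move=> urs h0; have dq := mxminpoly_min h0.
split.
  have : diagonalizable D by apply/diagonalizableP; exists rs.
  case=> P Pu Pd; exists (invmx P); rewrite unitmx_inv Pu invmxK; split => //.
  by move: Pd; rewrite /similar_to /conjmx pinvmxE.
move=> x; rewrite eigenvalue_root_min => /(root_dvdp dq).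
by rewrite root_prod_XsubC.
Qed.

Lemma horner4 n' (D : 'M[F]_n'.+1) (r1 r2 r3 r4 : F) :
  horner_mx D (\prod_(x <- [:: r1; r2; r3; r4]) ('X - x%:P)) =
  (D - r1%:M) *m (D - r2%:M) *m (D - r3%:M) *m (D - r4%:M).
Proof.
rewrite !big_cons big_nil mulr1 !rmorphM !rmorphB /= !horner_mx_X !horner_mx_C.
by rewrite -!mulmxE !mulmxA.
Qed.

Lemma even_zero (c2 : 2%N \in [pchar F]) (x : F) m : x *+ (2 * m) = 0.
Proof. by rewrite mulrnA mulr2n (addrr_pchar2 c2) mul0rn. Qed.

End Final.

Theorem proposition2p11 (F : fieldType)
  (char2 : 2%N \in [pchar F])
  (card4 : exists s : seq F, uniq s /\ size s = 4%N)
  (k : nat) (hk : (1 <= k)%N)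
  (B : 'M[F]_((4 * k).+2))
  (hB : non_derogative B)
  (a : F) (ha0 : a != 0) (ha1 : a != 1) :
  (forall c : F, \tr B = c -> c != 0 ->
     exists N D : 'M[F]_((4 * k).+2),
       [/\ B = N + D, N *m N = 0, diagonalizable_mx D &
           forall x : F, eigenvalue D x -> x \in [:: 0; c; c * a; c * (a + 1)]])
  /\
  (\tr B = 0 -> forall b : F, b ^+ 2 = (char_poly B)`_(4 * k) + a ^+ 2 + a + 1 ->
     exists N D : 'M[F]_((4 * k).+2),
       [/\ B = N + D, N *m N = 0, diagonalizable_mx D &
           forall x : F, eigenvalue D x -> x \in [:: b; b + 1; b + a; b + a + 1]]).
Proof.
have hBs : size (mxminpoly B) = (4 * k).+3.
  by rewrite hB size_char_poly.
have hn : ((2 * k).-1.+2 + (2 * k).-1.+2)%N = (4 * k).+2 by lia.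
have opp2 : forall x : F, - x = x := oppr_pchar2 char2.
have add2 : forall x : F, x + x = 0 := addrr_pchar2 char2.
split.
- move=> c trc c0.
  have := @core F ((2 * k).-1) (4 * k).+1 hn B hBs 0 (c * a) 0 c (c * a) (c * (a + 1)).
  case.
  + by move=> i _; rewrite /ttc addr0 if_same !opp2 add2 mul0r.
  + rewrite /ttc addr0; under eq_bigr do rewrite if_same opp2.
    rewrite sumr_const card_ord prednK ?muln_gt0 // even_zero // add0r.
    by rewrite raddf0 subr0.
  move=> N [D [BND NN DE]].
  rewrite !add0r -horner4 in DE.
  have urs : uniq [:: 0; c; c * a; c * (a + 1)].
    have a10 : a + 1 != 0 by rewrite addr_eq0 opp2.
    have h1 : c != c * a by rewrite -{1}[c]mulr1 (inj_eq (mulfI c0)) eq_sym.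
    have h2 : c != c * (a + 1).
      by rewrite -{1}[c]mulr1 (inj_eq (mulfI c0)) -{1}[1]add0r (inj_eq (addIr 1)) eq_sym.
    have h3 : c * a != c * (a + 1).
      by rewrite (inj_eq (mulfI c0)) -{1}[a]addr0 (inj_eq (addrI a)) eq_sym oner_eq0.
    rewrite /= !inE !negb_or -!andbA h1 h2 h3 !(eq_sym 0) c0 !mulf_neq0 //.
  have [dD eD] := finish urs DE.
  by exists N, D; split.
- move=> trB b _.
  have := @core F ((2 * k).-1) (4 * k).+1 hn B hBs b 1 a a 1 (a + 1).
  case.
  + move=> i _; rewrite /ttc; case: ifP => _; rewrite !opp2.
      by rewrite [a + 1]addrC add2 mulr0.
    by rewrite add2 mul0r.
  + rewrite raddfB /= trB mxtrace_scalar.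
    rewrite (_ : (4 * k).+2 = 2 * (2 * k).+1)%N; last by lia.
    rewrite even_zero // subr0 big_ord_recr /= /ttc eqxx.
    under eq_bigr => i _ do rewrite /= (ltn_eqF (ltn_ord i)) opp2.
    rewrite sumr_const card_ord opp2 addrA -[_ *+ _ + 1]mulrSr prednK ?muln_gt0 //.
    by rewrite even_zero // add0r add2.
  move=> N [D [BND NN DE]].
  rewrite -horner4 in DE.
  have urs : uniq [:: b; b + a; b + 1; b + (a + 1)].
    have hb : forall x, (b == b + x) = (x == 0).
      by move=> x; rewrite -{1}[b]addr0 (inj_eq (addrI b)) eq_sym.
    have a10 : a + 1 != 0 by rewrite addr_eq0 opp2.
    have h1 : a != a + 1 by rewrite -{1}[a]addr0 (inj_eq (addrI a)) eq_sym oner_eq0.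
    have h2 : 1 != a + 1.
      by rewrite -{1}[1]add0r (inj_eq (addIr 1)) eq_sym.
    rewrite /= !inE !negb_or -!andbA !hb !(inj_eq (addrI b)) ha0 a10 h1 h2 ha1.
    by rewrite oner_eq0.
  have [dD eD] := finish urs DE.
  exists N, D; split => // x /eD.
  by rewrite !inE addrA => /or4P [] /eqP ->; rewrite eqxx ?orbT.
Qed.
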